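(* Let $n,r\geq 1$ and $0\le k\le n$. Then \[ \mathcal{S}_{r}\Lambda^k(\mathbb{R}^n)\subset \mathcal{S}_{r+1}^-\Lambda^k(\mathbb{R}^n)\subset \mathcal{S}_{r+1}\Lambda^k(\mathbb{R}^n). \]
   Context: Fix $n\ge1$. For a multi-index $\alpha\in\mathbb{N}^n$ (nonnegative integers) and a subset $\sigma=\{\sigma(1)<\dots<\sigma(k)\}\subset\{1,\dots,n\}$, the form monomial is $x^\alpha dx_\sigma:=x_1^{\alpha_1}\cdots x_n^{\alpha_n}\,dx_{\sigma(1)}\wedge\cdots\wedge dx_{\sigma(k)}$, of degree $|\alpha|=\sum_i\alpha_i$. $\mathcal{H}_r\Lambda^k(\mathbb{R}^n)$ is the span of form monomials with $|\alpha|=r$, $|\sigma|=k$ (it is $0$ if $r<0$ or $k\notin\{0,\dots,n\}$), and $\mathcal{P}_r\Lambda^k:=\bigoplus_{j=0}^r\mathcal{H}_j\Lambda^k$ ($=0$ if $r<0$). $d$ is the exterior derivative. The Koszul operator $\kappa$ is defined on monomials by $\kappa(x^\alpha dx_\sigma)=\sum_{i=1}^k(-1)^{i+1}x^\alpha x_{\sigma(i)}\,dx_{\sigma(1)}\wedge\cdots\wedge\widehat{dx_{\sigma(i)}}\wedge\cdots\wedge dx_{\sigma(k)}$ (hat = omitted) and extended linearly. The linear degree of a form monomial is $\mathrm{ldeg}(x^\alpha dx_\sigma):=\#\{i\notin\sigma:\alpha_i=1\}$, and $\mathcal{H}_{r,l}\Lambda^k(\mathbb{R}^n)$ is the span of the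 form monomials in $\mathcal{H}_r\Lambda^k$ with linear degree $\ge l$. Define $\mathcal{J}_r\Lambda^k(\mathbb{R}^n):=\sum_{l\ge1}\kappa\,\mathcal{H}_{r+l-1,l}\Lambda^{k+1}(\mathbb{R}^n)$. The serendipity space is $\mathcal{S}_r\Lambda^k(\mathbb{R}^n):=\mathcal{P}_r\Lambda^k+\mathcal{J}_r\Lambda^k+d\,\mathcal{J}_{r+1}\Lambda^{k-1}$ (this sum is direct; forms of degree $-1$ or $n+1$ are $0$). For $r\ge1$ the trimmed serendipity space is $\mathcal{S}_r^-\Lambda^k(\mathbb{R}^n):=\mathcal{S}_{r-1}\Lambda^k(\mathbb{R}^n)+\kappa\,\mathcal{S}_{r-1}\Lambda^{k+1}(\mathbb{R}^n)$. *)

(* Defs.v *)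
(* Polynomial differential forms on R^n, coefficients in a
   real field R, represented by their coefficient function: a form is the
   map (alpha, sigma) |-> coefficient of x^alpha dx_sigma. *)
From HB Require Import structures.
From mathcomp Require Import all_boot all_order all_algebra.
Set Implicit Arguments. Unset Strict Implicit. Unset Printing Implicit Defensive.
Import Order.TTheory GRing.Theory Num.Theory.
Local Open Scope ring_scope.

Definition mindex (n : nat) := 'I_n -> nat.

Definition pform (R : nzRingType) (n : nat) := mindex n -> {set 'I_n} -> R.

Definition mdeg n (a : mindex n) : nat := (\sum_(i < n) a i)%N.

Definition ldeg n (a : mindex n) (s : {set 'I_n}) : nat :=
  #|[set i : 'I_n | (i \notin s) && (a i == 1%N)]|.

Definition addE n (a : mindex n) (j : 'I_n) : mindex n :=
  fun i => if i == j then (a i).+1 else a i.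
Definition subE n (a : mindex n) (j : 'I_n) : mindex n :=
  fun i => if i == j then (a i).-1 else a i.

Definition sgn (R : nzRingType) n (s : {set 'I_n}) (j : 'I_n) : R :=
  (-1) ^+ #|[set l in s | (l < j)%N]|.

(* Koszul operator, coefficientwise:
   kappa(x^a dx_s) = sum_i (-1)^(i+1) x^a x_{s(i)} dx_{s \ s(i)} *)
Definition kappa (R : nzRingType) n (w : pform R n) : pform R n :=
  fun b t => \sum_(j < n | (j \notin t) && (0 < b j)%N)
               sgn R t j * w (subE b j) (j |: t).

(* exterior derivative, coefficientwise:
   d(x^a dx_s) = sum_{j} a_j x^(a - e_j) dx_j /\ dx_s *)
Definition dext (R : nzRingType) n (w : pform R n) : pform R n :=
  fun b t => \sum_(j < n | j \in t)
               (b j).+1%:R * sgn R t j * w (addE b j) (t :\ j).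

Definition fzero (R : nzRingType) n (w : pform R n) : Prop :=
  forall a s, w a s = 0.

Definition inH (R : nzRingType) n (r l k : nat) (w : pform R n) : Prop :=
  forall a s, w a s != 0 -> [/\ mdeg a = r, #|s| = k & (l <= ldeg a s)%N].

Definition inP (R : nzRingType) n (r k : nat) (w : pform R n) : Prop :=
  forall a s, w a s != 0 -> (mdeg a <= r)%N /\ #|s| = k.

(* w in J_r Lambda^k = sum_{l >= 1} kappa H_{r+l-1,l} Lambda^{k+1}
   (a sum of subspaces: finite sums of elements) *)
Definition inJ (R : nzRingType) n (r k : nat) (w : pform R n) : Prop :=
  exists (m : nat) (f : nat -> pform R n),
    (forall l, (1 <= l <= m)%N -> inH (r + l).-1 l k.+1 (f l)) /\
    (forall a s, w a s = \sum_(1 <= l < m.+1) kappa (f l) a s).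

(* w in S_r Lambda^k = P_r Lambda^k + J_r Lambda^k + d J_{r+1} Lambda^{k-1}
   (the last summand is 0 when k = 0) *)
Definition inS (R : nzRingType) n (r k : nat) (w : pform R n) : Prop :=
  exists (p j g : pform R n),
    [/\ inP r k p, inJ r k j,
        (if k is k'.+1 then inJ r.+1 k' g else fzero g) &
        forall a s, w a s = p a s + j a s + dext g a s].

(* w in S^-_r Lambda^k = S_{r-1} Lambda^k + kappa S_{r-1} Lambda^{k+1}
   (only meaningful for r >= 1) *)
Definition inStrim (R : nzRingType) n (r k : nat) (w : pform R n) : Prop :=
  exists (u v : pform R n),
    [/\ inS r.-1 k u, inS r.-1 k.+1 v &
        forall a s, w a s = u a s + kappa v a s].

(* Main.v *)
Require Import Defs.
From mathcomp Require Import all_boot all_order all_algebra.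
From Stdlib Require Import FunctionalExtensionality.
From mathcomp Require Import ring.
Set Implicit Arguments. Unset Strict Implicit. Unset Printing Implicit Defensive.
Import Order.TTheory GRing.Theory Num.Theory.

Section Core.
Local Open Scope ring_scope.
Variable R : realFieldType.
Variable n : nat.
Implicit Types (w : pform R n) (b : mindex n) (t : {set 'I_n}) (i j : 'I_n).

Definition cnt t i := #|[set l in t | (l < i)%N]|.

Lemma cntU t i j : j \notin t -> cnt (j |: t) i = ((j < i)%N + cnt t i)%N.
Proof.
move=> jt; rewrite /cnt; case: (boolP (j < i)%N) => ji.
  have -> : [set l in j |: t | (l < i)%N] = j |: [set l in t | (l < i)%N].
    by apply/setP => l; rewrite !inE; case: (eqVneq l j) => [->|]; rewrite ?ji ?orbT.
  by rewrite cardsU1 inE (negbTE jt).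
have -> : [set l in j |: t | (l < i)%N] = [set l in t | (l < i)%N].
  by apply/setP => l; rewrite !inE; case: (eqVneq l j) => [->|] //=; rewrite (negbTE ji) andbF.
by [].
Qed.

Lemma sgnE t i : sgn R t i = (-1) ^+ cnt t i.
Proof. by []. Qed.

Lemma sgnU t i j : j \notin t -> sgn R (j |: t) i = (-1) ^+ (j < i)%N * sgn R t i.
Proof. by move=> jt; rewrite !sgnE cntU // exprD. Qed.

Lemma sgnD t i j : i \in t -> sgn R t j = (-1) ^+ (i < j)%N * sgn R (t :\ i) j.
Proof.
move=> it; rewrite -sgnU ?setD1K //.
by rewrite !inE eqxx.
Qed.

Lemma sgnUself t j : j \notin t -> sgn R (j |: t) j = sgn R t j.
Proof. by move=> jt; rewrite sgnU // ltnn expr0 mul1r. Qed.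

Lemma sgnDself t j : j \in t -> sgn R (t :\ j) j = sgn R t j.
Proof. by move=> jt; rewrite (sgnD _ jt) ltnn expr0 mul1r. Qed.

Lemma sgn_sq t j : sgn R t j * sgn R t j = 1.
Proof. by rewrite sgnE -exprMn mulrNN mul1r expr1n. Qed.

Lemma sign_swap i j : i != j -> (-1) ^+ (j < i)%N = - ((-1) ^+ (i < j)%N) :> R.
Proof.
move=> ij; case: (ltngtP i j) => h.
- by rewrite expr1 expr0 opprK.
- by rewrite expr1 expr0.
- by move: ij; rewrite (val_inj h) eqxx.
Qed.

Lemma subE_comm b i j : subE (subE b j) i = subE (subE b i) j.
Proof.
apply: functional_extensionality => l; rewrite /subE.
by case: (eqVneq l i) => [->|]; case: (eqVneq _ j) => //= ->.
Qed.

Lemma addE_subE b j : (0 < b j)%N -> addE (subE b j) j = b.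
Proof.
move=> bj; apply: functional_extensionality => l; rewrite /subE /addE.
by case: (eqVneq l j) => [->|] //; rewrite prednK.
Qed.

Lemma subE_addE b j : subE (addE b j) j = b.
Proof.
apply: functional_extensionality => l; rewrite /subE /addE.
by case: (eqVneq l j) => [->|].
Qed.

Lemma addE_subE_comm b i j : i != j -> addE (subE b j) i = subE (addE b i) j.
Proof.
move=> ij; apply: functional_extensionality => l; rewrite /subE /addE.
case: (eqVneq l i) => [->|li]; first by rewrite (negbTE ij).
by [].
Qed.

Lemma subE_ne b i j : i != j -> subE b j i = b i.
Proof. by rewrite /subE => /negbTE ->. Qed.
Lemma addE_ne b i j : i != j -> addE b j i = b i.
Proof. by rewrite /addE => /negbTE ->. Qed.

Lemma kappa_kappa w b t : kappa (kappa w) b t = 0.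
Proof.
pose P j i := [&& j \notin t, (0 < b j)%N, i \notin t, (0 < b i)%N & i != j].
pose G j i := sgn R t j * sgn R (j |: t) i * w (subE (subE b j) i) (i |: (j |: t)).
pose H j i := if P j i then G j i else 0.
have E : kappa (kappa w) b t = \sum_j \sum_i H j i.
  rewrite /kappa big_mkcond /=; apply: eq_bigr => j _.
  case: (boolP ((j \notin t) && (0 < b j)%N)) => /= [/andP[jt bj]|hj].
    rewrite mulr_sumr big_mkcond /=; apply: eq_bigr => i _.
    rewrite /H /P jt bj /= !inE negb_or.
    case: (eqVneq i j) => [->|ij] /=; first by rewrite !andbF.
    by rewrite (subE_ne b ij) andbT; case: ifP => // _; rewrite mulrA.
  rewrite big1 // => i _; rewrite /H /P.
  by move: hj; case: (j \notin t); case: (0 < b j)%N.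
have anti i j : H i j = - H j i.
  have Psym : P i j = P j i.
    rewrite /P eq_sym.
    by case: (i \notin t); case: (j \notin t); case: (0 < b i)%N; case: (0 < b j)%N.
  rewrite /H Psym; case Pji: (P j i); last by rewrite oppr0.
  move: Pji => /and5P[jt bj it bi ij].
  rewrite /G subE_comm setUCA !sgnU // (sign_swap ij); ring.
have S0 : \sum_j \sum_i H j i = - \sum_j \sum_i H j i.
  rewrite {1}exchange_big /= -sumrN; apply: eq_bigr => i _.
  rewrite -sumrN; apply: eq_bigr => j _; exact: anti.
rewrite E; move: S0; set S := \sum_j _ => S0.
have : S *+ 2 = 0 by rewrite mulr2n {1}S0 addNr.
by move/eqP; rewrite mulrn_eq0 /= => /eqP.
Qed.

Definition T1 w b t j i := sgn R t j * (((subE b j i).+1)%:R * sgn R (j |: t) i *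
   w (addE (subE b j) i) ((j |: t) :\ i)).
Definition T2 w b t i j := (b i).+1%:R * sgn R t i * (sgn R (t :\ i) j *
   w (subE (addE b i) j) (j |: (t :\ i))).

Lemma L1 w b t : kappa (dext w) b t =
  \sum_(j | (j \notin t) && (0 < b j)%N) (b j)%:R * w b t +
  \sum_(j | (j \notin t) && (0 < b j)%N) \sum_(i in t) T1 w b t j i.
Proof.
rewrite /kappa -big_split /=; apply: eq_bigr => j /andP[jt bj].
rewrite /dext (bigD1 j) ?setU11 //=.
rewrite mulrDr mulr_sumr; congr (_ + _).
  rewrite /subE eqxx prednK // sgnUself // addE_subE // setU1K //.
  have -> : forall c s W : R, s * (c * s * W) = (s * s) * (c * W) by move=> *; ring.
  by rewrite sgn_sq mul1r.
rewrite /T1; apply: eq_bigl => i /=; rewrite in_setU1.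
by case: (eqVneq i j) => [->|] /=; [rewrite (negbTE jt) | rewrite andbT].
Qed.

Lemma L2 w b t : dext (kappa w) b t =
  \sum_(i in t) (b i).+1%:R * w b t +
  \sum_(i in t) \sum_(j | (j \notin t) && (0 < b j)%N) T2 w b t i j.
Proof.
rewrite /dext -big_split /=; apply: eq_bigr => i it.
rewrite /kappa (bigD1 i) /=; last by rewrite setD11 /addE eqxx.
rewrite mulrDr mulr_sumr; congr (_ + _).
  rewrite subE_addE setD1K // sgnDself //.
  have -> : forall c s W : R, c * s * (s * W) = (s * s) * (c * W) by move=> *; ring.
  by rewrite sgn_sq mul1r.
rewrite /T2; apply: eq_bigl => j /=; rewrite in_setD1.
case: (eqVneq j i) => [->|ji] /=; first by rewrite andbF it.
by rewrite addE_ne // andbT.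
Qed.

Lemma T12 w b t i j : i \in t -> j \notin t -> T1 w b t j i + T2 w b t i j = 0.
Proof.
move=> it jt.
have ij : i != j by apply: contraNneq jt => <-.
rewrite /T1 /T2.
have -> : (j |: t) :\ i = j |: (t :\ i).
  apply/setP => l; rewrite !inE.
  by case: (eqVneq l j) => [->|] //=; rewrite eq_sym ij.
rewrite subE_ne // addE_subE_comm // sgnU // (sgnD j it) (sign_swap ij).
set e := (-1) ^+ (i < j)%N : R; set W := w _ _.
have e2 : e * e = 1 by rewrite /e -exprMn mulrNN mul1r expr1n.
transitivity ((1 - e * e) * ((b i).+1%:R * sgn R t i * sgn R (t :\ i) j * W)); first ring.
by rewrite e2 subrr mul0r.
Qed.

Lemma mdeg_split b t : mdeg b =
  (\sum_(j | (j \notin t) && (0 < b j)%N) b j + \sum_(i in t) b i)%N.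
Proof.
rewrite /mdeg (bigID (fun i => i \in t)) /= addnC; congr (_ + _)%N.
rewrite [LHS](bigID (fun j => (0 < b j)%N)) /=.
rewrite [X in (_ + X)%N = _]big1 ?addn0 //.
by move=> j /andP[_]; rewrite lt0n negbK => /eqP.
Qed.

Lemma cartan w b t :
  kappa (dext w) b t + dext (kappa w) b t = (mdeg b + #|t|)%:R * w b t.
Proof.
rewrite L1 L2 addrACA.
have -> : \sum_(j | (j \notin t) && (0 < b j)%N) \sum_(i in t) T1 w b t j i +
   \sum_(i in t) \sum_(j | (j \notin t) && (0 < b j)%N) T2 w b t i j = 0.
  rewrite [X in _ + X]exchange_big /= -big_split /=.
  apply: big1 => j /andP[jt _]; rewrite -big_split /=.
  by apply: big1 => i it; rewrite T12.
rewrite addr0 -!mulr_suml -mulrDl; congr (_ * _).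
rewrite -!natr_sum -natrD; congr (_ %:R).
rewrite (mdeg_split b t) -addnA; congr (_ + _)%N.
under eq_bigr do rewrite -addn1.
by rewrite big_split /= sum1_card.
Qed.


Lemma kappa_ext w w' b t : (forall a s, w a s = w' a s) -> kappa w b t = kappa w' b t.
Proof. by move=> H; apply: eq_bigr => j _; rewrite H. Qed.
Lemma dext_ext w w' b t : (forall a s, w a s = w' a s) -> dext w b t = dext w' b t.
Proof. by move=> H; apply: eq_bigr => j _; rewrite H. Qed.
Lemma kappa0 w b t : (forall a s, w a s = 0) -> kappa w b t = 0.
Proof. by move=> H; apply: big1 => j _; rewrite H mulr0. Qed.
Lemma dext0 w b t : (forall a s, w a s = 0) -> dext w b t = 0.
Proof. by move=> H; apply: big1 => j _; rewrite H mulr0. Qed.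
Lemma kappaD w w1 w2 b t : (forall a s, w a s = w1 a s + w2 a s) ->
  kappa w b t = kappa w1 b t + kappa w2 b t.
Proof. by move=> H; rewrite /kappa -big_split; apply: eq_bigr => j _; rewrite H mulrDr. Qed.
Lemma dextD w w1 w2 b t : (forall a s, w a s = w1 a s + w2 a s) ->
  dext w b t = dext w1 b t + dext w2 b t.
Proof. by move=> H; rewrite /dext -big_split; apply: eq_bigr => j _; rewrite H mulrDr. Qed.
Lemma kappaZ (c : R) w b t : kappa (fun a s => c * w a s) b t = c * kappa w b t.
Proof. by rewrite /kappa mulr_sumr; apply: eq_bigr => j _; rewrite mulrCA. Qed.
Lemma kappa_sum w (F : nat -> pform R n) m b t :
  (forall a s, w a s = \sum_(1 <= l < m) F l a s) ->
  kappa w b t = \sum_(1 <= l < m) kappa (F l) b t.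
Proof.
move=> H; rewrite /kappa exchange_big /=; apply: eq_bigr => j _.
by rewrite H mulr_sumr.
Qed.
Lemma dext_sum w (F : nat -> pform R n) m b t :
  (forall a s, w a s = \sum_(1 <= l < m) F l a s) ->
  dext w b t = \sum_(1 <= l < m) dext (F l) b t.
Proof.
move=> H; rewrite /dext exchange_big /=; apply: eq_bigr => j _.
by rewrite H mulr_sumr.
Qed.

Lemma kappa_nz w b t : kappa w b t != 0 ->
  exists2 j, (j \notin t) && (0 < b j)%N & w (subE b j) (j |: t) != 0.
Proof.
move=> nz; case: (pickP (fun j => ((j \notin t) && (0 < b j)%N) &&
   (w (subE b j) (j |: t) != 0))) => [j /andP[h1 h2]|H]; first by exists j.
move: nz; rewrite /kappa big1 ?eqxx // => j hj.
by move: (H j); rewrite hj /= => /negbFE/eqP ->; rewrite mulr0.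
Qed.
Lemma dext_nz w b t : dext w b t != 0 ->
  exists2 j, j \in t & w (addE b j) (t :\ j) != 0.
Proof.
move=> nz; case: (pickP (fun j => (j \in t) &&
   (w (addE b j) (t :\ j) != 0))) => [j /andP[h1 h2]|H]; first by exists j.
move: nz; rewrite /dext big1 ?eqxx // => j hj.
by move: (H j); rewrite hj /= => /negbFE/eqP ->; rewrite mulr0.
Qed.

Lemma mdeg_subE b j : (0 < b j)%N -> mdeg b = (mdeg (subE b j)).+1.
Proof.
move=> bj; rewrite /mdeg (bigD1 j) // [in RHS](bigD1 j) //= /subE eqxx.
rewrite -addSn prednK //; congr (_ + _)%N; apply: eq_bigr => i /negbTE -> //.
Qed.
Lemma mdeg_addE b j : mdeg (addE b j) = (mdeg b).+1.
Proof.
rewrite /mdeg (bigD1 j) // [in RHS](bigD1 j) //= /addE eqxx.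
rewrite addSn; congr (_ + _)%N.+1; apply: eq_bigr => i /negbTE -> //.
Qed.

Definition supp m k w := forall a s, w a s != 0 -> mdeg a = m /\ #|s| = k.

Lemma kappa_supp m k w : supp m k.+1 w -> supp m.+1 k (kappa w).
Proof.
move=> H b t /kappa_nz[j /andP[jt bj] /H[h1 h2]].
split; first by rewrite (mdeg_subE bj) h1.
by move: h2; rewrite cardsU1 jt => -[].
Qed.
Lemma dext_supp m k w : supp m.+1 k w -> supp m k.+1 (dext w).
Proof.
move=> H b t /dext_nz[j jt /H[h1 h2]].
split; first by move: h1; rewrite mdeg_addE => -[].
by rewrite (cardsD1 j t) jt h2.
Qed.
Lemma kappa_P r k w : inP r k.+1 w -> inP r.+1 k (kappa w).
Proof.
move=> H b t /kappa_nz[j /andP[jt bj] /H[h1 h2]].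
split; first by rewrite (mdeg_subE bj).
by move: h2; rewrite cardsU1 jt => -[].
Qed.
Lemma supp_P m r k w : supp m k w -> (m <= r)%N -> inP r k w.
Proof. by move=> H mr a s /H[-> ->]. Qed.
Lemma inH_supp m l k w : inH m l k w -> supp m k w.
Proof. by move=> H a s /H[]. Qed.
Lemma inP_mono r k w : inP r k w -> inP r.+1 k w.
Proof. by move=> H a s /H[h ->]; split => //; apply: leqW. Qed.
Lemma nz_add (x y : R) : x + y != 0 -> x != 0 \/ y != 0.
Proof.
case: (eqVneq x 0) => [->|]; first by rewrite add0r; right.
by left.
Qed.
Lemma inP_add r k w w1 w2 : inP r k w1 -> inP r k w2 ->
  (forall a s, w a s = w1 a s + w2 a s) -> inP r k w.
Proof.
move=> H1 H2 E a s; rewrite E => /nz_add[/H1|/H2] //.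
Qed.

Lemma inJ0 r k : inJ r k (fun (a : mindex n) (s : {set 'I_n}) => 0 : R).
Proof. exists 0%N, (fun _ _ _ => 0); split => [l|a s]; first by case: l. by rewrite big_geq. Qed.
Lemma inJ_shift r k (jw : pform R n) : inJ r k jw -> exists q (j' : pform R n),
  [/\ supp r.+1 k q, inJ r.+1 k j' & forall a s, jw a s = q a s + j' a s].
Proof.
case=> [[|m] [f [Hf Ej]]].
  exists (fun _ _ => 0), jw; split => //; last by move=> *; rewrite add0r.
  - by move=> a s; rewrite eqxx.
  - by exists 0%N, f; split => [[|l]|].  
exists (kappa (f 1%N)), (fun a s => \sum_(1 <= l < m.+1) kappa (f l.+1) a s).
split.
- apply: kappa_supp; apply: (@inH_supp _ 1%N).
  by have := Hf 1%N; rewrite addn1 /=; apply.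
- exists m, (fun l => f l.+1); split => // l /andP[l1 lm].
  have H := Hf l.+1 lm; rewrite -addSnnS in H; move=> a s /H[h1 h2 h3].
  by split => //; apply: ltnW.
- by move=> a s; rewrite Ej big_nat_recl.
Qed.

Lemma inJ_add r k (jw j1 j2 : pform R n) : inJ r k j1 -> inJ r k j2 ->
  (forall a s, jw a s = j1 a s + j2 a s) -> inJ r k jw.
Proof.
move=> [m1 [f1 [H1 E1]]] [m2 [f2 [H2 E2]]] E.
pose g1 l : pform R n := fun a s => if (l <= m1)%N then f1 l a s else 0.
pose g2 l : pform R n := fun a s => if (l <= m2)%N then f2 l a s else 0.
have Sg (m0 : nat) (f0 g0 : nat -> pform R n) (M : nat) :
  (m0 <= M)%N -> (forall l a s, g0 l a s = if (l <= m0)%N then f0 l a s else 0) ->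
  forall a s, \sum_(1 <= l < M.+1) kappa (g0 l) a s = \sum_(1 <= l < m0.+1) kappa (f0 l) a s.
  move=> mM Hg a s; rewrite (@big_cat_nat _ _ _ m0.+1) //=.
  rewrite [X in _ + X]big_nat_cond [X in _ + X]big1 ?addr0.
    by apply: eq_big_nat => l /andP[_ lm]; apply: kappa_ext => a' s'; rewrite Hg -ltnS lm.
  move=> l /andP[/andP[ml _] _]; apply: kappa0 => a' s'.
  by rewrite Hg leqNgt ml.
exists (maxn m1 m2), (fun l a s => g1 l a s + g2 l a s); split.
  move=> l /andP[l1 lm] a s /nz_add[]; rewrite /g1 /g2.
    by case: ifP => [lm1|]; [move=> h; apply: H1 => //; rewrite l1 lm1 | rewrite eqxx].
  by case: ifP => [lm2|]; [move=> h; apply: H2 => //; rewrite l1 lm2 | rewrite eqxx].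
move=> a s; rewrite E E1 E2.
rewrite [RHS](eq_bigr (fun l => kappa (g1 l) a s + kappa (g2 l) a s)); last by move=> l _; apply: kappaD.
rewrite big_split /=.
by rewrite (Sg m1 f1 g1) ?leq_maxl // (Sg m2 f2 g2) ?leq_maxr.
Qed.


Lemma gcond0 r k : (if k is k'.+1 then inJ r.+1 k' (fun (a : mindex n) (s : {set 'I_n}) => 0 : R)
                    else fzero (fun (a : mindex n) (s : {set 'I_n}) => 0 : R)).
Proof. by case: k => [|k]; [move=> a s | apply: inJ0]. Qed.

Lemma S0 r k : inS r k (fun (a : mindex n) (s : {set 'I_n}) => 0 : R).
Proof.
exists (fun _ _ => 0), (fun _ _ => 0), (fun _ _ => 0); split.
- by move=> a s; rewrite eqxx.
- exact: inJ0.
- exact: gcond0.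
- by move=> a s; rewrite dext0 // !addr0.
Qed.

Lemma S_add r k (w u v : pform R n) : inS r k u -> inS r k v ->
  (forall a s, w a s = u a s + v a s) -> inS r k w.
Proof.
move=> [p1 [j1 [g1 [P1 J1 G1 E1]]]] [p2 [j2 [g2 [P2 J2 G2 E2]]]] E.
exists (fun a s => p1 a s + p2 a s), (fun a s => j1 a s + j2 a s),
  (fun a s => g1 a s + g2 a s); split.
- exact: inP_add P1 P2 _.
- exact: inJ_add J1 J2 _.
- case: k G1 G2 {P1 P2 J1 J2 E1 E2 E} => [|k] G1 G2.
    by move=> a s; rewrite G1 G2 addr0.
  exact: inJ_add G1 G2 _.
- move=> a s; rewrite E E1 E2 (@dextD (fun a s => g1 a s + g2 a s) g1 g2) //.
  ring.
Qed.

Lemma S_mono r k (u : pform R n) : inS r k u -> inS r.+1 k u.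
Proof.
move=> [p [jw [g [Pp Jj Gg Eu]]]].
have [q1 [j1 [Sq1 Jj1 Ej]]] := inJ_shift Jj.
case: k Pp Jj Gg Eu Sq1 Jj1 Ej => [|k] Pp Jj Gg Eu Sq1 Jj1 Ej.
  exists (fun a s => p a s + q1 a s), j1, g; split => //.
  - apply: inP_add (inP_mono Pp) (supp_P Sq1 _) _ => //.
  - by move=> a s; rewrite Eu Ej; ring.
have [q2 [g2 [Sq2 Jg2 Eg]]] := inJ_shift Gg.
exists (fun a s => p a s + q1 a s + dext q2 a s), j1, g2; split => //.
- apply: inP_add (inP_add (inP_mono Pp) (supp_P Sq1 _) (fun _ _ => erefl)) _ _ => //.
  by apply: supp_P (dext_supp Sq2) _.
- by move=> a s; rewrite Eu Ej (dextD _ _ Eg); ring.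
Qed.

Lemma S_kappa r k (v : pform R n) : inS r k.+1 v -> inS r.+1 k (kappa v).
Proof.
move=> [p [jw [g [Pp [m1 [f1 [Hf1 Ej]]] [m [f [Hf Eg]]] Ev]]]].
pose c l : R := ((r.+1 + l).-1.+1 + k)%:R.
pose f' l : pform R n := fun a s => c l * f l a s.
exists (kappa p), (fun a s => \sum_(1 <= l < m.+1) kappa (f' l) a s), (fun _ _ => 0); split.
- exact: kappa_P.
- exists m, f'; split => // l hl a s; rewrite /f' => h.
  apply: (Hf l hl); apply: contraNneq h => ->; rewrite mulr0.
  by [].
- exact: gcond0.
move=> b t; rewrite (dext0 _ _ (fun _ _ => erefl)) addr0.
rewrite (kappaD _ _ Ev) (@kappaD (fun a s => p a s + jw a s) p jw b t (fun _ _ => erefl)).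
rewrite (kappa_sum _ _ Ej) big1 ?addr0; last by move=> l _; apply: kappa_kappa.
congr (_ + _).
rewrite (kappa_sum _ _ (fun a s => dext_sum a s Eg)); apply: eq_big_nat => l hl.
rewrite /f' kappaZ.
apply: (@addIr _ (dext (kappa (kappa (f l))) b t)).
rewrite cartan dext0; last by move=> a s; apply: kappa_kappa.
rewrite addr0.
have Sk : supp (r.+1 + l).-1.+1 k (kappa (f l)).
  by apply: kappa_supp; apply: inH_supp (Hf l hl).
case: (eqVneq (kappa (f l) b t) 0) => [->|nz]; first by rewrite !mulr0.
by have [-> ->] := Sk _ _ nz.
Qed.

End Core.

Theorem mainTheorem1 (R : realFieldType) (n r k : nat) :
  (1 <= n)%N -> (1 <= r)%N -> (k <= n)%N ->
  (forall w : pform R n, inS r k w -> inStrim r.+1 k w) /\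
  (forall w : pform R n, inStrim r.+1 k w -> inS r.+1 k w).
Proof.
move=> _ _ _; split.
  move=> w Sw; exists w, (fun _ _ => 0%R : R); split => //.
    exact: S0.
  by move=> a s; rewrite kappa0 // addr0.
move=> w [u [v [Su Sv E]]].
exact: S_add (S_mono Su) (S_kappa Sv) E.
Qed.
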